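(* Let $(\mathcal{K},[\cdot,\cdot])$ be a Krein space with fundamental symmetry $J$, let $\{k_n\}_{n\in\mathbb{N}}$ be a frame for the Krein space $\mathcal{K}$, and let $S$ be its frame operator. Then for every $k\in\mathcal{K}$, $$k=\sum_{n\in\mathbb{N}}[k_n,k]\,S^{-1}k_n\qquad\text{and}\qquad k=\sum_{n\in\mathbb{N}}[S^{-1}k_n,k]\,k_n,$$ and both series converge unconditionally (in the norm $\|\cdot\|_J$).
   Context: A Krein space $(\mathcal{K},[\cdot,\cdot])$ has a fundamental decomposition $\mathcal{K}=\mathcal{K}_+\oplus\mathcal{K}_-$ and fundamental symmetry $J(k^++k^-)=k^+-k^-$, such that $[h,k]_J:=[h,Jk]$ makes $\mathcal{K}$ a Hilbert space; $\|k\|_J:=\sqrt{[k,k]_J}$. A countable sequence $\{k_n\}$ is a frame for the Krein space $\mathcal{K}$ if there are $0<A\leq B<\infty$ with $A\|k\|_J^2\leq\sum_n|[k_n,k]|^2\leq B\|k\|_J^2$ for all $k$. Let $\mathfrak{k}_2(\mathbb{N})$ be $\ell_2(\mathbb{N})$ equipped with a Krein space inner product $[\cdot,\cdot]$ whose fundamental symmetry $\tilde J$ satisfies that $[\cdot,\cdot]_{\tilde J}$ equals the standard inner product of $\ell_2(\mathbb{N})$. The pre-frame operator is $T:\mathfrak{k}_2(\mathbb{N})\to\mathcal{K}$, $T(\alpha_n)_n=\sum_n\alpha_nk_n$, with Krein-space adjoint $T^*$ (i.e. $[T^*h,a]=[h,Ta]$), and the frame operator is $S:=T\tilde JT^*$;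 one has $Sk=\sum_n[k_n,k]k_n$ for $k\in\mathcal{K}$. The operator $S$ is self-adjoint with respect to $[\cdot,\cdot]$ and invertible with bounded inverse (established in the paper prior to this theorem). *)

(* Defs.v *)
From HB Require Import structures.
From mathcomp Require Import all_boot all_order all_algebra.
From mathcomp Require Import complex.
From mathcomp Require Import all_classical all_reals all_analysis.
Set Implicit Arguments. Unset Strict Implicit. Unset Printing Implicit Defensive.
Import Order.TTheory GRing.Theory Num.Theory.
Import numFieldTopology.Exports numFieldNormedType.Exports.
Local Open Scope classical_set_scope.
Local Open Scope ring_scope.

Section Krein.
Variable R : realType.
Local Notation C := (R[i]).
Variable V : lmodType C.

Definition sesq_hermitian (ip : V -> V -> C) : Prop :=
  (forall h k, ip h k = conjc (ip k h)) /\
  (forall h (a : C) k l, ip h (a *: k + l) = a * ip h k + ip h l).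

Definition subspace (P : V -> Prop) : Prop :=
  P 0 /\ (forall (a : C) x y, P x -> P y -> P (a *: x + y)).

Definition normJ (ip : V -> V -> C) (J : V -> V) (k : V) : R :=
  Num.sqrt (@complex.Re R (ip k (J k))).

Definition cauchyJ ip J (u : nat -> V) : Prop :=
  forall e : R, 0 < e -> exists N : nat, forall m n : nat,
    (N <= m)%N -> (N <= n)%N -> normJ ip J (u m - u n) < e.

Definition cvgJ ip J (u : nat -> V) (l : V) : Prop :=
  (fun N => normJ ip J (u N - l)) @ \oo --> (0 : R).

(* (K, [.,.]) is a Krein space with fundamental decomposition K = Kp (+) Km
   and fundamental symmetry J, such that [.,.]_J = [., J .] makes K a
   Hilbert space. *)
Definition krein_space (ip : V -> V -> C) (Kp Km : V -> Prop) (J : V -> V)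
  : Prop :=
  sesq_hermitian ip /\
  [/\ subspace Kp /\ subspace Km,
      (forall x, Kp x -> Km x -> x = 0) /\
      (forall k, exists p m, [/\ Kp p, Km m & k = p + m]),
      (forall p m, Kp p -> Km m -> ip p m = 0) /\
      ((forall p, Kp p -> p != 0 -> 0 < ip p p) /\
      (forall m, Km m -> m != 0 -> ip m m < 0)),
      (forall p m, Kp p -> Km m -> J (p + m) = p - m) &
      (forall u, cauchyJ ip J u -> exists l, cvgJ ip J u l)].

Definition krein_frame ip J (kn : nat -> V) : Prop :=
  exists A B : R, 0 < A /\ A <= B /\ forall k : V,
    ((A * normJ ip J k ^+ 2)%:E <=
       \sum_(0 <= n <oo) ((Normc.normc (ip (kn n) k)) ^+ 2)%:E)%E /\
    (\sum_(0 <= n <oo) ((Normc.normc (ip (kn n) k)) ^+ 2)%:E <=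
       (B * normJ ip J k ^+ 2)%:E)%E.

Definition frame_operator ip J (kn : nat -> V) (S : V -> V) : Prop :=
  forall k, cvgJ ip J (fun N => \sum_(0 <= n < N) ip (kn n) k *: kn n) (S k).

Definition uncond_cvgJ ip J (u : nat -> V) (l : V) : Prop :=
  forall sigma : nat -> nat, bijective sigma ->
    cvgJ ip J (fun N => \sum_(0 <= n < N) u (sigma n)) l.

End Krein.

(* Submission.v *)
Require Import Defs.
From HB Require Import structures.
From mathcomp Require Import all_boot all_order all_algebra.
From mathcomp Require Import complex.
From mathcomp Require Import all_classical all_reals all_analysis.
From mathcomp Require Import ring lra.
Import Order.TTheory GRing.Theory Num.Theory.
Local Open Scope ring_scope.
Local Open Scope complex_scope.
Set Implicit Arguments. Unset Strict Implicit.
Notation cRe := (@complex.Re _).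
Notation cIm := (@complex.Im _).

Section CX.
Variable R : realType.
Definition sq (z : R[i]) : R := cRe z ^+ 2 + cIm z ^+ 2.
Lemma sq_ge0 z : 0 <= sq z.
Proof. rewrite /sq; case: z => a b /=; nra. Qed.
Lemma ReD (x y : R[i]) : cRe (x + y) = cRe x + cRe y.
Proof. by case: x => a b; case: y => c d. Qed.
Lemma ReN (x : R[i]) : cRe (- x) = - cRe x.
Proof. by case: x. Qed.
Lemma ReB (x y : R[i]) : cRe (x - y) = cRe x - cRe y.
Proof. by rewrite ReD ReN. Qed.
Lemma Re_conj (x : R[i]) : cRe (conjc x) = cRe x.
Proof. by case: x. Qed.
Lemma sq_conj (x : R[i]) : sq (conjc x) = sq x.
Proof. rewrite /sq; case: x => a b /=; ring. Qed.
Lemma Re_conjM (x : R[i]) : cRe (conjc x * x) = sq x.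
Proof. rewrite /sq; case: x => a b; simpc => /=; ring. Qed.
Lemma Re_conjMM (a z : R[i]) : cRe (conjc a * a * z) = sq a * cRe z.
Proof. rewrite /sq; case: a => a b; case: z => c d; simpc => /=; ring. Qed.
Lemma sqM (a z : R[i]) : sq (a * z) = sq a * sq z.
Proof. rewrite /sq; case: a => a b; case: z => c d; simpc => /=; ring. Qed.
Lemma sqN (z : R[i]) : sq (- z) = sq z.
Proof. rewrite /sq; case: z => a b /=; ring. Qed.
Lemma sq0 : sq 0 = 0.
Proof. by rewrite /sq /= expr0n /= addr0. Qed.
Lemma sq_eq0 z : sq z = 0 -> z = 0.
Proof. rewrite /sq; case: z => a b /= h.
have ha : a = 0 by nra. have hb : b = 0 by nra. by rewrite ha hb. Qed.
Lemma sqB_le (x y : R[i]) : sq (x - y) <= 2 * sq x + 2 * sq y.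
Proof. rewrite /sq; case: x => a b; case: y => c d /=.
have := sqr_ge0 (a + c); have := sqr_ge0 (b + d); nra. Qed.
Lemma Re_amgm (d z : R[i]) (t : R) : 0 < t ->
  2 * t * cRe (d * z) <= t ^+ 2 * sq d + sq z.
Proof. rewrite /sq; case: d => a b; case: z => c e; simpc => /= ht.
have := sqr_ge0 (t * a - c); have := sqr_ge0 (t * b + e); nra. Qed.
Lemma normc_sq (z : R[i]) : Normc.normc z ^+ 2 = sq z.
Proof. rewrite /sq; case: z => a b /=; rewrite sqr_sqrtr //; nra. Qed.
Lemma Re_real (r : R) (z : R[i]) : cRe (r%:C * z) = r * cRe z.
Proof. case: z => a b; simpc => /=; ring. Qed.
Lemma conj_real (r : R) : conjc (r%:C) = r%:C.
Proof. by rewrite /= oppr0. Qed.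
Lemma sq_real (r : R) : sq (r%:C) = r ^+ 2.
Proof. by rewrite /sq /= expr0n /= addr0. Qed.
End CX.
Lemma sq1 (R : realType) : sq (1 : R[i]) = 1.
Proof. by rewrite /sq /= expr1n expr0n /= addr0. Qed.

Section K.
Variable R : realType.
Variable V : lmodType R[i].
Variables (ip : V -> V -> R[i]) (Kp Km : V -> Prop) (J : V -> V).
Hypothesis hk : krein_space ip Kp Km J.

Lemma herm h k : ip h k = conjc (ip k h).
Proof. by case: hk => -[]. Qed.
Lemma ipL h a k l : ip h (a *: k + l) = a * ip h k + ip h l.
Proof. by case: hk => -[]. Qed.
Lemma ipr0 h : ip h 0 = 0.
Proof. have := ipL h 1 0 0; rewrite scaler0 addr0 mul1r => E.
by apply: (addrI (ip h 0)); rewrite addr0 -E. Qed.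
Lemma iprD h k l : ip h (k + l) = ip h k + ip h l.
Proof. by have := ipL h 1 k l; rewrite scale1r mul1r. Qed.
Lemma iprZ h a k : ip h (a *: k) = a * ip h k.
Proof. by rewrite -[a *: k]addr0 ipL ipr0 addr0. Qed.
Lemma iprN h k : ip h (- k) = - ip h k.
Proof. by rewrite -scaleN1r iprZ mulN1r. Qed.
Lemma iprB h k l : ip h (k - l) = ip h k - ip h l.
Proof. by rewrite iprD iprN. Qed.
Lemma ipr_sum h I (r : seq I) (P : pred I) (F : I -> V) :
  ip h (\sum_(i <- r | P i) F i) = \sum_(i <- r | P i) ip h (F i).
Proof. exact: (big_morph (ip h) (iprD h) (ipr0 h)). Qed.
Lemma iplD h k l : ip (k + l) h = ip k h + ip l h.
Proof. by rewrite herm iprD rmorphD /= -!herm. Qed.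
Lemma iplZ h a k : ip (a *: k) h = conjc a * ip k h.
Proof. by rewrite herm iprZ rmorphM /= -herm. Qed.
Lemma ipl0 h : ip 0 h = 0.
Proof. by rewrite herm ipr0 conjc0. Qed.
Lemma iplN h k : ip (- k) h = - ip k h.
Proof. by rewrite herm iprN rmorphN /= -herm. Qed.
Lemma iplB h k l : ip (k - l) h = ip k h - ip l h.
Proof. by rewrite iplD iplN. Qed.

Lemma decomp k : exists p m, [/\ Kp p, Km m & k = p + m].
Proof. by case: hk => _ [_ [_ ?] _ _ _]. Qed.
Lemma Kp_lin a x y : Kp x -> Kp y -> Kp (a *: x + y).
Proof. by case: hk => _ [[[_ ?] _] _ _ _ _]; auto. Qed.
Lemma Km_lin a x y : Km x -> Km y -> Km (a *: x + y).
Proof. by case: hk => _ [[_ [_ ?]] _ _ _ _]; auto. Qed.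
Lemma Km0 : Km 0.
Proof. by case: hk => _ [[_ [? _]] _ _ _ _]. Qed.
Lemma Km_opp m : Km m -> Km (- m).
Proof. by move=> hm; have := Km_lin (-1) hm Km0; rewrite addr0 scaleN1r. Qed.
Lemma Kp0 : Kp 0.
Proof. by case: hk => _ [[[? _] _] _ _ _ _]. Qed.
Lemma Jdef p m : Kp p -> Km m -> J (p + m) = p - m.
Proof. by case: hk => _ [_ _ _ ? _]; auto. Qed.
Lemma orth p m : Kp p -> Km m -> ip p m = 0.
Proof. by case: hk => _ [_ _ [? _] _ _]; auto. Qed.
Lemma orth' p m : Kp p -> Km m -> ip m p = 0.
Proof. by move=> hp hm; rewrite herm orth // conjc0. Qed.
Lemma Kp_pos p : Kp p -> p != 0 -> 0 < ip p p.
Proof. by case: hk => _ [_ _ [_ [? _]] _ _]; auto. Qed.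
Lemma Km_neg m : Km m -> m != 0 -> ip m m < 0.
Proof. by case: hk => _ [_ _ [_ [_ ?]] _ _]; auto. Qed.
Lemma complete u : cauchyJ ip J u -> exists l, cvgJ ip J u l.
Proof. by case: hk => _ [_ _ _ _ ?]; auto. Qed.

Lemma JL a x y : J (a *: x + y) = a *: J x + J y.
Proof.
have [p1 [m1 [hp1 hm1 ->]]] := decomp x.
have [p2 [m2 [hp2 hm2 ->]]] := decomp y.
have -> : a *: (p1 + m1) + (p2 + m2) = (a *: p1 + p2) + (a *: m1 + m2).
  by rewrite scalerDr addrACA.
rewrite (Jdef (Kp_lin a hp1 hp2) (Km_lin a hm1 hm2)) !Jdef // scalerBr.
by rewrite addrACA opprD.
Qed.
Lemma JD x y : J (x + y) = J x + J y.
Proof. by have := JL 1 x y; rewrite !scale1r. Qed.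
Lemma J0 : J 0 = 0.
Proof. have := JD 0 0; rewrite addr0 => E. by apply: (addrI (J 0)); rewrite addr0 -E. Qed.
Lemma JZ a x : J (a *: x) = a *: J x.
Proof. by rewrite -[a *: x]addr0 JL J0 addr0. Qed.
Lemma JN x : J (- x) = - J x.
Proof. by rewrite -scaleN1r JZ scaleN1r. Qed.
Lemma JB x y : J (x - y) = J x - J y.
Proof. by rewrite JD JN. Qed.
Lemma J_sum I (r : seq I) (P : pred I) (F : I -> V) :
  J (\sum_(i <- r | P i) F i) = \sum_(i <- r | P i) J (F i).
Proof. exact: (big_morph J JD J0). Qed.
Lemma JJ x : J (J x) = x.
Proof.
have [p [m [hp hm ->]]] := decomp x.
rewrite Jdef // Jdef ?opprK //; exact: Km_opp.
Qed.
Lemma ipJ x y : ip x (J y) = ip (J x) y.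
Proof.
have [p1 [m1 [hp1 hm1 ->]]] := decomp x.
have [p2 [m2 [hp2 hm2 ->]]] := decomp y.
rewrite !Jdef // ?(iplD, iplB, iprD, iprB).
rewrite iprN iplN iplN iprN (orth hp1 hm2) (orth' hp2 hm1).
by rewrite ?oppr0 ?(addr0, add0r).
Qed.

Definition Q x := cRe (ip x (J x)).

Lemma ipJJ x y : ip x y = ip x (J (J y)).
Proof. by rewrite JJ. Qed.
Lemma gsym x y : ip x (J y) = conjc (ip y (J x)).
Proof. by rewrite ipJ herm. Qed.
Lemma Q_dec p m : Kp p -> Km m -> Q (p + m) = cRe (ip p p) - cRe (ip m m).
Proof.
move=> hp hm; rewrite /Q Jdef // iprB !iplD (orth hp hm) (orth' hp hm).
by rewrite ?addr0 ?add0r ReB.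
Qed.
Lemma Q_ge0 x : 0 <= Q x.
Proof.
have [p [m [hp hm ->]]] := decomp x; rewrite Q_dec //.
have h1 : 0 <= cRe (ip p p).
  have [->|np] := eqVneq p 0; first by rewrite ipr0.
  by move: (Kp_pos hp np); rewrite ltcE => /andP[_ /ltW].
have h2 : cRe (ip m m) <= 0.
  have [->|nm] := eqVneq m 0; first by rewrite ipr0.
  by move: (Km_neg hm nm); rewrite ltcE => /andP[_ /ltW].
lra.
Qed.
Lemma Q_eq0 x : Q x = 0 -> x = 0.
Proof.
have [p [m [hp hm ->]]] := decomp x; rewrite Q_dec //.
have h1 : p != 0 -> 0 < cRe (ip p p).
  by move=> np; move: (Kp_pos hp np); rewrite ltcE => /andP[_].
have h2 : m != 0 -> cRe (ip m m) < 0.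
  by move=> nm; move: (Km_neg hm nm); rewrite ltcE => /andP[_].
have h1' : 0 <= cRe (ip p p).
  have [->|np] := eqVneq p 0; first by rewrite ipr0. exact/ltW/h1.
have h2' : cRe (ip m m) <= 0.
  have [->|nm] := eqVneq m 0; first by rewrite ipr0. exact/ltW/h2.
move=> E.
have [->|np] := eqVneq p 0; have [->|nm] := eqVneq m 0; rewrite ?addr0 //.
- exfalso; have := h2 nm; clear nm h1 h2 hm hp; lra.
- exfalso; have := h1 np; clear np h1 h2 hm hp; lra.
- exfalso; have := h1 np; clear nm np h1 h2 hm hp; lra.
Qed.
Lemma QD x y : Q (x + y) = Q x + Q y + 2 * cRe (ip x (J y)).
Proof.
rewrite /Q JD !iprD !iplD !ReD (gsym y x).
by case: (ip x (J y)) => a b /=; ring.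
Qed.
Lemma QZ a x : Q (a *: x) = sq a * Q x.
Proof. rewrite /Q JZ iprZ iplZ mulrA [a * _]mulrC; exact: Re_conjMM. Qed.
Lemma QJ x : Q (J x) = Q x.
Proof. by rewrite /Q JJ -ipJ. Qed.
Lemma QN x : Q (- x) = Q x.
Proof. by rewrite -scaleN1r QZ sqN sq1 mul1r. Qed.
Lemma Q0 : Q 0 = 0.
Proof. by rewrite /Q ipl0. Qed.
Lemma key_g x y (t : R) : 2 * t * cRe (ip x (J y)) <= t ^+ 2 * Q x + Q y.
Proof.
have := Q_ge0 (t%:C *: x + - y).
rewrite QD QZ QN sq_real JN iprN iplZ conj_real ReN Re_real; lra.
Qed.
Lemma key_ip x y (t : R) : 2 * t * cRe (ip x y) <= t ^+ 2 * Q x + Q y.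
Proof. by rewrite ipJJ -(QJ y); apply: key_g. Qed.
Lemma QD_le x y : Q (x + y) <= 2 * Q x + 2 * Q y.
Proof. have := key_g x y 1; rewrite QD; lra. Qed.
Lemma QB_le x y : Q (x - y) <= 2 * Q x + 2 * Q y.
Proof. by have := QD_le x (- y); rewrite QN. Qed.
Lemma CS y v : sq (ip y v) <= Q y * Q v.
Proof.
have [->|nv] := eqVneq v 0; first by rewrite ipr0 sq0 Q0 mulr0.
have Qv : 0 < Q v.
  by rewrite lt_neqAle Q_ge0 andbT; apply/eqP => /esym /Q_eq0; apply/eqP.
set z := ip y v.
have := key_ip y (conjc z *: v) (Q v).
rewrite iprZ Re_conjM QZ sq_conj -/z.
have := sq_ge0 z; have := Q_ge0 y; nra.
Qed.


End K.

Section F.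
Variable R : realType.
Variable V : lmodType R[i].
Variables (ip : V -> V -> R[i]) (Kp Km : V -> Prop) (J : V -> V).
Hypothesis hk : krein_space ip Kp Km J.
Variables (kn : nat -> V) (A B : R).
Hypothesis hA : 0 < A.
Hypothesis hAB : A <= B.
Hypothesis hfr : forall k : V,
    ((A * normJ ip J k ^+ 2)%:E <=
       \sum_(0 <= n <oo) ((Normc.normc (ip (kn n) k)) ^+ 2)%:E)%E /\
    (\sum_(0 <= n <oo) ((Normc.normc (ip (kn n) k)) ^+ 2)%:E <=
       (B * normJ ip J k ^+ 2)%:E)%E.

Local Notation Q := (Q ip J).

Lemma normJ2 x : normJ ip J x ^+ 2 = Q x.
Proof. by rewrite /normJ sqr_sqrtr //; exact: Q_ge0 hk x. Qed.

Lemma cvgJP u l : cvgJ ip J u l <->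
  (forall e, 0 < e -> exists N, forall n, (N <= n)%N -> Q (u n - l) < e).
Proof.
split.
- move=> /cvgrPdist_lt h e he.
  have := h (Num.sqrt e); rewrite sqrtr_gt0 => /(_ he) [N _ HN].
  exists N => n /HN /=; rewrite sub0r normrN ger0_norm ?sqrtr_ge0 //.
  by rewrite /normJ ltr_sqrt.
- move=> h; apply/cvgrPdist_lt => e he.
  have [N HN] := h (e ^+ 2) (exprn_gt0 2 he).
  exists N => // n /HN /= hn; rewrite sub0r normrN ger0_norm ?sqrtr_ge0 //.
  by rewrite /normJ -(ger0_norm (ltW he)) -sqrtr_sqr ltr_sqrt // exprn_gt0.
Qed.

Local Notation P x N := (\sum_(0 <= n < N) sq (ip (kn n) x)).

Lemma series_eq x : (\sum_(0 <= n <oo) ((Normc.normc (ip (kn n) x)) ^+ 2)%:E =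
   ereal_sup (range (fun N => (P x N)%:E)))%E.
Proof.
have h0 : forall n, (0 <= n)%N -> xpredT n ->
   (0 <= ((Normc.normc (ip (kn n) x)) ^+ 2)%:E)%E.
  by move=> n _ _; rewrite lee_fin sqr_ge0.
move/ereal_nondecreasing_series/ereal_nondecreasing_cvgn/cvg_lim : h0 => ->//.
have E : forall N, (\sum_(0 <= i < N) ((Normc.normc (ip (kn i) x)) ^+ 2)%:E)%E
   = (P x N)%:E.
  by move=> N; rewrite sumEFin; under eq_bigr do rewrite normc_sq.
by congr ereal_sup; apply: eq_set => y; rewrite propeqE; split => -[N _ <-]; exists N.
Qed.

Lemma frame_up x N : P x N <= B * Q x.
Proof.
have [_] := hfr x; rewrite series_eq normJ2 => h.
have : ((P x N)%:E <= (B * Q x)%:E)%E.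
  by apply: le_trans h; apply: ereal_sup_ubound; exists N.
by rewrite lee_fin.
Qed.

Lemma frame_low x e : 0 < e -> exists N, A * Q x - e < P x N.
Proof.
move=> he; have [h _] := hfr x; rewrite series_eq normJ2 in h.
have : ((A * Q x - e)%:E < ereal_sup (range (fun N => (P x N)%:E)))%E.
  by apply: lt_le_trans h; rewrite lte_fin; lra.
by move=> /ereal_sup_gt [_ [N _ <-]]; rewrite lte_fin; exists N.
Qed.

Lemma Re_sum I (r : seq I) (Pr : pred I) (F : I -> R[i]) :
  cRe (\sum_(i <- r | Pr i) F i) = \sum_(i <- r | Pr i) cRe (F i).
Proof. exact: (big_morph _ (@ReD R) (erefl (cRe 0))). Qed.

Lemma sq_sum_ge0 K (d : nat -> R[i]) : 0 <= \sum_(0 <= m < K) sq (d m).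
Proof. by apply: sumr_ge0 => m _; apply: sq_ge0. Qed.

Lemma bessel K (d : nat -> R[i]) :
  Q (\sum_(0 <= m < K) d m *: kn m) <= B * \sum_(0 <= m < K) sq (d m).
Proof.
set v := \sum_(0 <= m < K) d m *: kn m.
set X := \sum_(0 <= m < K) sq (d m).
have hB : 0 < B := lt_le_trans hA hAB.
have E1 : Q v = \sum_(0 <= m < K) cRe (d m * ip (J v) (kn m)).
  rewrite /Submission.Q (ipJ hk) -Re_sum {2}/v (ipr_sum hk).
  by congr cRe; apply: eq_bigr => m _; rewrite (iprZ hk).
have E2 : \sum_(0 <= m < K) sq (ip (J v) (kn m)) <= B * Q v.
  rewrite -(QJ hk v); apply: le_trans (frame_up _ K).
  by apply: ler_sum => m _; rewrite (herm hk) sq_conj.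
have E3 : 2 * B * Q v <= B ^+ 2 * X + \sum_(0 <= m < K) sq (ip (J v) (kn m)).
  rewrite E1 mulr_sumr /X mulr_sumr -big_split /=.
  by apply: ler_sum => m _; apply: Re_amgm.
have := Q_ge0 hk v; have := sq_sum_ge0 K d; rewrite -/X => h1 h2.
have h3 : B * Q v <= B * (B * X).
  have -> : B * (B * X) = B ^+ 2 * X by rewrite mulrA -expr2.
  lra.
by rewrite ler_pM2l in h3.
Qed.

Lemma small (a c : R) : (forall e, 0 < e -> a <= c * e) -> a <= 0.
Proof.
move=> h; rewrite leNgt; apply/negP => ha.
have hc : 0 < `|c| + 1 by rewrite ltr_pwDr // normr_ge0.
have := h (a / (2 * (`|c| + 1))) (divr_gt0 ha (mulr_gt0 (ltr0Sn _ 1) hc)).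
have hcc : c <= `|c| := ler_norm c.
set t := a / (2 * (`|c| + 1)).
have ht : t * (2 * (`|c| + 1)) = a by rewrite /t mulfVK // gt_eqF // mulr_gt0.
have t0 : 0 < t by rewrite /t divr_gt0 // mulr_gt0.
nra.
Qed.

Lemma cvgJ_C u l (c : R) : 0 < c ->
  (forall e, 0 < e -> exists N, forall n, (N <= n)%N -> Q (u n - l) <= c * e) ->
  cvgJ ip J u l.
Proof.
move=> hc h; apply/cvgJP => e he.
have [N HN] := h (e / (2 * c)) (divr_gt0 he (mulr_gt0 (ltr0Sn _ 1) hc)).
have E : c * (e / (2 * c)) = e / 2.
  by field; rewrite gt_eqF.
exists N => n /HN; rewrite E; lra.
Qed.

Lemma cvgJ_uniq u l1 l2 : cvgJ ip J u l1 -> cvgJ ip J u l2 -> l1 = l2.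
Proof.
move=> /cvgJP h1 /cvgJP h2; apply/eqP; rewrite -subr_eq0; apply/eqP.
apply: (Q_eq0 hk); apply/le_anti; rewrite (Q_ge0 hk) andbT.
apply: (@small _ 4) => e he.
have [N1 H1] := h1 e he; have [N2 H2] := h2 e he.
have := QB_le hk (u (maxn N1 N2) - l2) (u (maxn N1 N2) - l1).
rewrite opprB addrC addrA subrK => h.
have := H1 _ (leq_maxl N1 N2); have := H2 _ (leq_maxr N1 N2); lra.
Qed.

Lemma cvgJ_lin u w l1 l2 a : cvgJ ip J u l1 -> cvgJ ip J w l2 ->
  cvgJ ip J (fun N => a *: u N + w N) (a *: l1 + l2).
Proof.
move=> /cvgJP h1 /cvgJP h2; apply: (@cvgJ_C _ _ (2 * sq a + 2)).
  by have := sq_ge0 a; lra.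
move=> e he; have [N1 H1] := h1 e he; have [N2 H2] := h2 e he.
exists (maxn N1 N2) => n; rewrite geq_max => /andP[n1 n2].
have -> : a *: u n + w n - (a *: l1 + l2) = a *: (u n - l1) + (w n - l2).
  by rewrite scalerBr opprD addrACA.
apply: le_trans (QD_le hk _ _) _; rewrite (QZ hk).
have := H1 _ n1; have := H2 _ n2; have := sq_ge0 a; have := Q_ge0 hk (u n - l1).
nra.
Qed.

Variable S : V -> V.
Hypothesis hS : frame_operator ip J kn S.

Definition sN x N := \sum_(0 <= n < N) ip (kn n) x *: kn n.

Lemma hS' x : cvgJ ip J (sN x) (S x).
Proof. exact: hS. Qed.

Lemma S_lin a x y : S (a *: x + y) = a *: S x + S y.
Proof.
apply: (cvgJ_uniq (hS' (a *: x + y))).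
have := cvgJ_lin a (hS' x) (hS' y); congr cvgJ; apply: funext => N.
rewrite /sN scaler_sumr -big_split /=; apply: eq_bigr => n _.
by rewrite (ipL hk) scalerDl scalerA.
Qed.

Lemma P_mono x N M : (N <= M)%N -> P x N <= P x M.
Proof.
move=> NM; rewrite (big_cat_nat (leq0n N) NM) /= lerDl.
by apply: sumr_ge0 => i _; apply: sq_ge0.
Qed.

Lemma P_ip x N : P x N = cRe (ip x (sN x N)).
Proof.
rewrite /sN (ipr_sum hk) Re_sum; apply: eq_bigr => n _.
by rewrite (iprZ hk) [ip x _](herm hk) mulrC Re_conjM.
Qed.

Lemma S_low x : A ^+ 2 * Q x <= 2 * Q (S x).
Proof.
rewrite -subr_le0; apply: (@small _ (2 + 2 * A)) => e he.
have [N1 H1] := frame_low x he.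
have [N2 H2] := (cvgJP _ _).1 (hS' x) e he.
set N := maxn N1 N2.
have h1 := P_mono x (leq_maxl N1 N2).
have h2 := H2 _ (leq_maxr N1 N2).
have h3 := key_ip hk x (sN x N) A.
rewrite -P_ip in h3.
have h4 := QD_le hk (S x) (sN x N - S x).
rewrite addrC subrK in h4.
rewrite -/N in h1 h2.
have h5 : 2 * A * (A * Q x - e) <= 2 * A * P x N.
  rewrite ler_pM2l ?mulr_gt0 //; apply: ltW; exact: lt_le_trans H1 h1.
clear H1 H2; lra.
Qed.

Lemma ipl_sum h I (r : seq I) (Pr : pred I) (F : I -> V) :
  ip (\sum_(i <- r | Pr i) F i) h = \sum_(i <- r | Pr i) ip (F i) h.
Proof. exact: (big_morph (ip^~ h) (fun a b => iplD hk h a b) (ipl0 hk h)). Qed.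

Lemma Qsym u v : Q (u - v) = Q (v - u).
Proof. by rewrite -(QN hk) opprB. Qed.

Lemma SA x y : ip y (S x) = ip (S y) x.
Proof.
apply/eqP; rewrite -subr_eq0; apply/eqP; apply: sq_eq0; apply/le_anti.
rewrite sq_ge0 andbT; apply: (@small _ (2 * Q y + 2 * Q x)) => e he.
have [N1 H1] := (cvgJP _ _).1 (hS' x) e he.
have [N2 H2] := (cvgJP _ _).1 (hS' y) e he.
set N := maxn N1 N2.
have h1 := H1 _ (leq_maxl N1 N2); have h2 := H2 _ (leq_maxr N1 N2).
rewrite -/N Qsym in h1; rewrite -/N Qsym in h2.
have F : ip y (sN x N) = ip (sN y N) x.
  rewrite /sN (ipr_sum hk) ipl_sum; apply: eq_bigr => n _.
  by rewrite (iprZ hk) (iplZ hk) -(herm hk) mulrC.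
have -> : ip y (S x) - ip (S y) x = ip y (S x - sN x N) - ip (S y - sN y N) x.
  by rewrite (iprB hk) (iplB hk) F opprB addrA subrK.
apply: le_trans (sqB_le _ _) _.
have c1 := CS hk y (S x - sN x N).
have c2 := CS hk x (S y - sN y N).
rewrite [ip (S y - _) x](herm hk) sq_conj.
have q1 := Q_ge0 hk y; have q2 := Q_ge0 hk x.
have d1 : Q y * Q (S x - sN x N) <= Q y * e by apply: ler_wpM2l => //; apply: ltW.
have d2 : Q x * Q (S y - sN y N) <= Q x * e by apply: ler_wpM2l => //; apply: ltW.
lra.
Qed.

Lemma P_ub x : has_sup (range (fun N => P x N)).
Proof.
split; first by exists (P x 0), 0%N.
by exists (B * Q x) => _ [N _ <-]; apply: frame_up.
Qed.

Lemma tail x e : 0 < e -> exists m0, forall K, P x K - P x m0 < e.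
Proof.
move=> he; have [_ [m0 _ <-] hm] := sup_adherent he (P_ub x).
exists m0 => K; have : P x K <= sup (range (fun N => P x N)).
  by apply: ub_le_sup; [case: (P_ub x) | exists K].
lra.
Qed.

Lemma reindex (sg : nat -> nat) N K (F : nat -> V) : injective sg ->
  (forall n, (n < N)%N -> (sg n < K)%N) ->
  \sum_(0 <= n < N) F (sg n) =
  \sum_(0 <= m < K) (if m \in map sg (index_iota 0 N) then F m else 0).
Proof.
move=> inj hK; rewrite -big_mkcond -big_filter.
have -> : \sum_(0 <= n < N) F (sg n) = \sum_(m <- map sg (index_iota 0 N)) F m.
  by rewrite big_map.
apply: perm_big; apply: uniq_perm.
- by rewrite map_inj_uniq // iota_uniq.
- by rewrite filter_uniq // iota_uniq.
move=> m; rewrite mem_filter; apply/idP/idP => [hm|/andP[] //].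
rewrite hm /= mem_index_iota leq0n /=.
by case/mapP: hm => n; rewrite mem_index_iota => /andP[_ /hK] ? ->.
Qed.

Lemma UC x sg : bijective sg ->
  cvgJ ip J (fun N => \sum_(0 <= n < N) ip (kn (sg n)) x *: kn (sg n)) (S x).
Proof.
case=> g sgg gsg; have inj : injective sg := can_inj sgg.
have hB : 0 < B := lt_le_trans hA hAB.
apply: (@cvgJ_C _ _ (2 * B + 2)); first lra.
move=> e he.
have [m0 Hm0] := tail x he.
have [M0 HM0] := (cvgJP _ _).1 (hS' x) e he.
set M := maxn M0 m0.
exists (\max_(j < m0) (g j).+1)%N => N hN.
set K := maxn M (\max_(n < N) (sg n).+1)%N.
set s := map sg (index_iota 0 N).
set c := fun m => ip (kn m) x.
set L := \sum_(0 <= n < N) ip (kn (sg n)) x *: kn (sg n).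
have hK : forall n, (n < N)%N -> (sg n < K)%N.
  move=> n hn; apply: leq_trans (leq_maxr M _).
  exact: (leq_bigmax (F := fun i : 'I_N => (sg i).+1) (Ordinal hn)).
have E1 : L = \sum_(0 <= m < K) (if m \in s then c m else 0) *: kn m.
  rewrite /L (reindex (fun m => c m *: kn m) inj hK).
  by apply: eq_bigr => m _; case: ifP => _ //; rewrite scale0r.
have E2 : sN x M = \sum_(0 <= m < K) (if (m < M)%N then c m else 0) *: kn m.
  have hMK : (M <= K)%N by rewrite /K leq_maxl.
  rewrite /sN (big_nat_widen _ _ _ _ _ hMK) big_mkcond.
  by apply: eq_bigr => m _ /=; case: (m < M)%N; rewrite ?scale0r.
set d := fun m => (if m \in s then c m else 0) - (if (m < M)%N then c m else 0).
have E3 : L - sN x M = \sum_(0 <= m < K) d m *: kn m.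
  by rewrite E1 E2 -sumrB; apply: eq_bigr => m _; rewrite scalerBl.
have B1 : Q (L - sN x M) <= B * \sum_(0 <= m < K) sq (d m).
  by rewrite E3; apply: bessel.
have hm0K : (m0 <= K)%N.
  by apply: leq_trans (leq_maxr M0 m0) _; rewrite /K leq_maxl.
have B2 : \sum_(0 <= m < K) sq (d m) <= P x K - P x m0.
  rewrite (big_cat_nat (leq0n m0) hm0K) /= [P x K](big_cat_nat (leq0n m0) hm0K) /=.
  have ak : forall a b : R, a + b - a = b by move=> a b; rewrite addrC addKr.
  rewrite ak big1_seq ?add0r; last first.
    move=> m; rewrite mem_index_iota /= => hm.
    have h1 : (m < M)%N by apply: leq_trans hm (leq_maxr M0 m0).
    have h2 : m \in s.
      apply/mapP; exists (g m); last by rewrite gsg.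
      rewrite mem_index_iota leq0n /=; apply: leq_trans hN.
      exact: (leq_bigmax (F := fun i : 'I_m0 => (g i).+1) (Ordinal hm)).
    by rewrite /d h1 h2 subrr sq0.
  apply: ler_sum => m _; rewrite /d.
  case: ifP => _; case: ifP => _.
  - by rewrite subrr sq0 sq_ge0.
  - by rewrite subr0.
  - by rewrite sub0r sqN.
  - by rewrite subrr sq0 sq_ge0.
have hM : (M0 <= M)%N := leq_maxl M0 m0.
have Q1 := HM0 _ hM.
have Q2 := Hm0 K.
have := QD_le hk (L - sN x M) (sN x M - S x); rewrite addrA subrK => h.
have : B * \sum_(0 <= m < K) sq (d m) <= B * e.
  by apply: ler_wpM2l; [exact: ltW | lra].
lra.
Qed.

Variable Sinv : V -> V.
Hypothesis c1 : cancel Sinv S.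
Hypothesis c2 : cancel S Sinv.

Lemma Sinv_lin a x y : Sinv (a *: x + y) = a *: Sinv x + Sinv y.
Proof. by apply: (can_inj c2); rewrite S_lin !c1. Qed.
Lemma Sinv_D x y : Sinv (x + y) = Sinv x + Sinv y.
Proof. by have := Sinv_lin 1 x y; rewrite !scale1r. Qed.
Lemma Sinv0 : Sinv 0 = 0.
Proof. have := Sinv_D 0 0; rewrite addr0 => E. by apply: (addrI (Sinv 0)); rewrite addr0 -E. Qed.
Lemma Sinv_Z a x : Sinv (a *: x) = a *: Sinv x.
Proof. by rewrite -[a *: x]addr0 Sinv_lin Sinv0 addr0. Qed.
Lemma Sinv_B x y : Sinv (x - y) = Sinv x - Sinv y.
Proof. by rewrite Sinv_D -scaleN1r Sinv_Z scaleN1r. Qed.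
Lemma Sinv_sum I (r : seq I) (Pr : pred I) (F : I -> V) :
  Sinv (\sum_(i <- r | Pr i) F i) = \sum_(i <- r | Pr i) Sinv (F i).
Proof. exact: (big_morph Sinv Sinv_D Sinv0). Qed.

Lemma main k :
    uncond_cvgJ ip J (fun n => ip (kn n) k *: Sinv (kn n)) k /\
    uncond_cvgJ ip J (fun n => ip (Sinv (kn n)) k *: kn n) k.
Proof.
split=> sg hsg.
- have hA2 : 0 < A ^+ 2 by rewrite exprn_gt0.
  apply: (@cvgJ_C _ _ (2 / A ^+ 2)); first by rewrite divr_gt0.
  move=> e he; have [N HN] := (cvgJP _ _).1 (UC k hsg) e he.
  exists N => n /HN; set L := \sum_(0 <= i < n) _ => hL.
  have -> : \sum_(0 <= i < n) ip (kn (sg i)) k *: Sinv (kn (sg i)) - k = Sinv (L - S k).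
    by rewrite Sinv_B c2 /L Sinv_sum; congr (_ - _); apply: eq_bigr => i _; rewrite Sinv_Z.
  have := S_low (Sinv (L - S k)); rewrite c1 => h.
  rewrite -subr_ge0.
  have -> : 2 / A ^+ 2 * e - Q (Sinv (L - S k)) =
      (2 * e - A ^+ 2 * Q (Sinv (L - S k))) / A ^+ 2.
    by field; rewrite gt_eqF.
  by rewrite divr_ge0 ?exprn_ge0 ?(ltW hA) //; lra.
- have h : forall v, ip (Sinv v) k = ip v (Sinv k).
    by move=> v; rewrite -{1}(c1 k) SA c1.
  have := UC (Sinv k) hsg; rewrite c1; congr cvgJ; apply: funext => N.
  by apply: eq_bigr => i _; rewrite h.
Qed.
End F.

Unset Implicit Arguments.
Theorem theorem3p6 (R : realType) (V : lmodType R[i])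
    (ip : V -> V -> R[i]) (Kp Km : V -> Prop) (J : V -> V)
    (kn : nat -> V) (S Sinv : V -> V) :
  krein_space ip Kp Km J ->
  krein_frame ip J kn ->
  frame_operator ip J kn S ->
  cancel Sinv S -> cancel S Sinv ->
  forall k : V,
    uncond_cvgJ ip J (fun n => ip (kn n) k *: Sinv (kn n)) k /\
    uncond_cvgJ ip J (fun n => ip (Sinv (kn n)) k *: kn n) k.
Proof.
move=> hk [A [B [hA [hAB hfr]]]] hS c1 c2 k.
exact: (main hk hA hAB hfr hS c1 c2).
Qed.
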